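(* Let $\nu>2$ and let $F_\nu$ be the CDF of the Student's $t$-distribution with $\nu$ degrees of freedom, location $0$ and scale $1$. For every real $m\in(0,\nu)$ and every $t>0$, $$\frac{1}{(1-F_\nu(t))(t^2+\nu)^{\frac{\nu-1}{2}}}\le\frac{\sqrt{t^2+\nu-m}}{\kappa_m},\qquad \kappa_m=\frac{\Gamma\left(\frac{\nu+1}{2}\right)(\nu-m)\,m^{\nu/2-1}}{2\sqrt{\pi}\,\Gamma\left(\frac{\nu}{2}\right)}.$$ *)

(* Defs.v *)
From Stdlib Require Import Reals.
From Coquelicot Require Import Coquelicot.
Open Scope R_scope.

Definition Gamma (x : R) : R :=
  RInt_gen (fun s => Rpower s (x - 1) * exp (- s)) (at_right 0) (Rbar_locally p_infty).

Definition student_pdf (nu x : R) : R :=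
  Gamma ((nu + 1) / 2) / (sqrt (nu * PI) * Gamma (nu / 2))
  * Rpower (1 + x ^ 2 / nu) (- ((nu + 1) / 2)).

Definition student_cdf (nu t : R) : R :=
  RInt_gen (student_pdf nu) (Rbar_locally m_infty) (at_point t).

Definition kappa (nu m : R) : R :=
  Gamma ((nu + 1) / 2) * (nu - m) * Rpower m (nu / 2 - 1)
  / (2 * sqrt PI * Gamma (nu / 2)).

(* Main.v *)
Require Import Defs.
From Stdlib Require Import Reals.
From Coquelicot Require Import Coquelicot.
From Stdlib Require Import Lra Lia Psatz FunctionalExtensionality Classical_Prop.
Open Scope R_scope.

Lemma c2d_y f u x : continuity_2d_pt f u x -> continuous (fun y => f u y) x.
Proof.
intros H. apply filterlim_locally. intros eps. destruct (H eps) as [d Hd].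
exists d. intros y Hy. apply Hd. rewrite Rminus_eq_0, Rabs_R0; apply cond_pos. exact Hy.
Qed.

Lemma c2d_x f u x : continuity_2d_pt f u x -> continuous (fun y => f y x) u.
Proof.
intros H. apply filterlim_locally. intros eps. destruct (H eps) as [d Hd].
exists d. intros y Hy. apply Hd. exact Hy. rewrite Rminus_eq_0, Rabs_R0; apply cond_pos.
Qed.

Lemma c2d_swap f u x : continuity_2d_pt f u x -> continuity_2d_pt (fun a b => f b a) x u.
Proof.
intros H eps. destruct (H eps) as [d Hd]. exists d. intros a b Ha Hb. apply Hd; auto.
Qed.

Lemma exc (g : R -> R) a b : (forall z, Rmin a b <= z <= Rmax a b -> continuous g z) -> ex_RInt g a b.
Proof. intros H. apply (@ex_RInt_continuous R_CompleteNormedModule). exact H. Qed.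

Lemma PC_le f a b u0 : a <= b -> (forall u x, continuity_2d_pt f u x) ->
  continuous (fun u => RInt (fun x => f u x) a b) u0.
Proof.
intros Hab Hc. apply filterlim_locally. intros eps.
assert (He : 0 < eps / (b - a + 1)). { apply Rdiv_lt_0_compat. apply cond_pos. lra. }
destruct (uniform_continuity_2d f (u0 - 1) (u0 + 1) a b (fun u x _ _ => Hc u x)
   (mkposreal _ He)) as [d Hd].
assert (Hd0 : 0 < Rmin d 1). { apply Rmin_pos. apply cond_pos. lra. }
exists (mkposreal _ Hd0). intros u Hu. simpl in Hu.
change (Rabs (RInt (fun x => f u x) a b - RInt (fun x => f u0 x) a b) < eps).
assert (Hu' : Rabs (u - u0) < Rmin d 1) by exact Hu.
assert (Hu1 : Rabs (u - u0) < d) by (eapply Rlt_le_trans; [exact Hu'| apply Rmin_l]).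
assert (Hu2 : Rabs (u - u0) < 1) by (eapply Rlt_le_trans; [exact Hu'| apply Rmin_r]).
assert (E1 : ex_RInt (fun x => f u x) a b).
{ apply exc. intros z _. apply c2d_y, Hc. }
assert (E2 : ex_RInt (fun x => f u0 x) a b).
{ apply exc. intros z _. apply c2d_y, Hc. }
assert (Eq := RInt_minus _ _ _ _ E1 E2). 
change (Rabs (minus (RInt (fun x => f u x) a b) (RInt (fun x => f u0 x) a b)) < eps).
rewrite <- Eq.
eapply Rle_lt_trans.
- apply (norm_RInt_le (fun x => minus (f u x) (f u0 x)) (fun _ => eps / (b - a + 1)) a b _ _ Hab).
  + intros x Hx. apply Rlt_le. 
    assert (Hu3 : u0 - 1 <= u <= u0 + 1) by (revert Hu2; unfold Rabs; destruct Rcase_abs; lra).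
    apply (Hd u0 x u x); try lra.
    rewrite Rminus_eq_0, Rabs_R0. apply cond_pos.
  + apply (@RInt_correct R_CompleteNormedModule). apply (@ex_RInt_minus R_CompleteNormedModule); auto.
  + apply is_RInt_const.
- unfold scal; simpl; unfold mult; simpl.
  replace ((b - a) * (eps / (b - a + 1))) with (eps - eps/(b-a+1)) by (field; lra). lra.
Qed.

Lemma PC f a b u0 : (forall u x, continuity_2d_pt f u x) ->
  continuous (fun u => RInt (fun x => f u x) a b) u0.
Proof.
intros Hc. destruct (Rle_dec a b) as [H|H].
- apply PC_le; auto.
- assert (E : forall u, RInt (fun x => f u x) a b = opp (RInt (fun x => f u x) b a)).
  { intros u. rewrite opp_RInt_swap. reflexivity. apply exc. intros z _. apply c2d_y, Hc. }
  eapply continuous_ext. intros u. symmetry. apply E.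
  apply (@continuous_opp _ _ R_NormedModule (fun u => RInt (fun x => f u x) b a)). apply PC_le; auto. lra.
Qed.

Lemma dcont (g : R -> R) x : ex_derive g x -> continuous g x.
Proof. intros H. exact (@ex_derive_continuous R_AbsRing R_NormedModule g x H). Qed.

Lemma scal_R (a b : R) : scal a b = a * b.
Proof. reflexivity. Qed.

Lemma scal_R2 (a b : R) : @scal R_Ring (CompleteNormedModule.ModuleSpace R_AbsRing R_CompleteNormedModule) a b = a * b.
Proof. reflexivity. Qed.
Lemma scal_R3 (a b : R) : @scal R_Ring (NormedModule.ModuleSpace R_AbsRing R_NormedModule) a b = a * b.
Proof. reflexivity. Qed.

Lemma RI_scal (g : R -> R) a b k : ex_RInt g a b -> RInt (fun x => k * g x) a b = k * RInt g a b.
Proof. intros H. exact (@RInt_scal R_CompleteNormedModule g a b k H). Qed.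

Lemma RI_swap (g : R -> R) a b : ex_RInt g a b -> RInt g b a = - RInt g a b.
Proof. intros H. symmetry. exact (@opp_RInt_swap R_CompleteNormedModule g a b H). Qed.

Lemma RI_chasles (g : R -> R) a b c : ex_RInt g a b -> ex_RInt g b c -> RInt g a b + RInt g b c = RInt g a c.
Proof. intros H1 H2. exact (@RInt_Chasles R_CompleteNormedModule g a b c H1 H2). Qed.

Lemma RI_lin (g : R -> R) u v a b : ex_RInt g (u*a+v) (u*b+v) ->
  RInt (fun y => u * g (u*y+v)) a b = RInt g (u*a+v) (u*b+v).
Proof. intros H. exact (@RInt_comp_lin R_CompleteNormedModule g u v a b H). Qed.

Lemma RI_point (g : R -> R) a : RInt g a a = 0.
Proof. exact (@RInt_point R_CompleteNormedModule a g). Qed.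

Lemma RI_const a b c : RInt (fun _ => c) a b = (b - a) * c.
Proof. exact (@RInt_const R_CompleteNormedModule a b c). Qed.

Lemma RI_plus (f g : R -> R) a b : ex_RInt f a b -> ex_RInt g a b ->
  RInt (fun x => f x + g x) a b = RInt f a b + RInt g a b.
Proof. intros H1 H2. exact (@RInt_plus R_CompleteNormedModule f g a b H1 H2). Qed.

Lemma RI_sub (g : R -> R) a b c d : a <= c -> c <= d -> d <= b ->
  (forall x, a <= x <= b -> continuous g x) -> (forall x, a <= x <= b -> 0 <= g x) ->
  RInt g c d <= RInt g a b.
Proof.
intros H1 H2 H3 Hc Hp.
assert (E : forall p q, a <= p -> p <= q -> q <= b -> ex_RInt g p q).
{ intros p q Hp1 Hp2 Hp3. apply exc. intros z Hz. apply Hc.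
  rewrite Rmin_left in Hz by lra. rewrite Rmax_right in Hz by lra. lra. }
rewrite <- (RI_chasles g a c b) by (apply E; lra).
rewrite <- (RI_chasles g c d b) by (apply E; lra).
assert (0 <= RInt g a c). { apply RInt_ge_0. lra. apply E; lra. intros; apply Hp; lra. }
assert (0 <= RInt g d b). { apply RInt_ge_0. lra. apply E; lra. intros; apply Hp; lra. }
lra.
Qed.

Ltac toR := match goal with |- ?a = ?b => change (@eq R a b) end.

Lemma RI_ex_scal (g : R -> R) a b k : ex_RInt g a b -> ex_RInt (fun x => k * g x) a b.
Proof. intros H. exact (@ex_RInt_scal R_NormedModule g a b k H). Qed.

Lemma ftc_cont (g : R -> R) c z : (forall u, continuous g u) ->
  is_derive (fun z => RInt g c z) z (g z).
Proof.
intros Hg. apply (is_derive_RInt g (fun z => RInt g c z) c z).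
- apply filter_forall. intros b0. apply (@RInt_correct R_CompleteNormedModule). apply exc. intros; apply Hg.
- apply Hg.
Qed.

Lemma zero_deriv_eq (F G : R -> R) (dd : R -> R) c d :
  (forall z, is_derive F z (dd z)) -> (forall z, is_derive G z (dd z)) ->
  F c = G c -> F d = G d.
Proof.
intros HF HG Hc.
assert (K : forall a b, a < b -> (F b - G b) - (F a - G a) = 0).
{ intros a b Hab. destruct (MVT_cor2 (fun z => F z - G z) (fun _ => 0) a b Hab) as [e [He _]].
  - intros e _. apply is_derive_Reals.
    replace 0 with (dd e - dd e) by ring.
    apply (@is_derive_minus R_AbsRing R_NormedModule); auto.
  - lra. }
destruct (Rtotal_order c d) as [H|[H|H]].
- specialize (K _ _ H). lra.
- subst; auto.
- specialize (K _ _ H). lra.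
Qed.

Lemma fubini f a b c d : (forall u x, continuity_2d_pt f u x) ->
  RInt (fun x => RInt (fun u => f u x) c d) a b = RInt (fun u => RInt (fun x => f u x) a b) c d.
Proof.
intros Hc.
assert (Hs : forall x u, continuity_2d_pt (fun x u => f u x) x u).
{ intros x u. apply c2d_swap. apply Hc. }
apply (zero_deriv_eq (fun d => RInt (fun x => RInt (fun u => f u x) c d) a b)
  (fun d => RInt (fun u => RInt (fun x => f u x) a b) c d)
  (fun z => RInt (fun x => f z x) a b) c d).
- intros z.
  assert (HD : forall u x, Derive (fun z => RInt (fun u => f u x) c z) u = f u x).
  { intros u x. apply is_derive_unique. apply (ftc_cont (fun u => f u x)). intros v. apply c2d_x, Hc. }
  assert (H := is_derive_RInt_param (fun z x => RInt (fun u => f u x) c z) a b z).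
  replace (RInt (fun x => f z x) a b) with (RInt (fun t => Derive (fun u => RInt (fun u0 => f u0 t) c u) z) a b). apply H.
  + apply filter_forall. intros x0 t _. exists (f x0 t). apply (ftc_cont (fun u => f u t)). intros v. apply c2d_x, Hc.
  + intros t _. apply continuity_2d_pt_ext with f. intros; symmetry; apply HD. apply Hc.
  + apply filter_forall. intros y. apply exc. intros zz _.
    apply (PC (fun x u => f u x)). exact Hs.
  + apply RInt_ext. intros x _. apply HD.
- intros z. apply (ftc_cont (fun z => RInt (fun x => f z x) a b)). intros u. apply PC. exact Hc.
- simpl. rewrite (RInt_ext _ (fun _ => 0)). rewrite RInt_const. rewrite RInt_point. unfold scal, zero; simpl; unfold mult; simpl; ring.
  intros x _. apply (RInt_point c (fun u => f u x)).
Qed.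

Definition gs (x : R) := exp (- (x ^ 2)).

Lemma gs_cont x : continuous gs x.
Proof. apply dcont. unfold gs. auto_derive. auto. Qed.

Lemma gs_ex a b : ex_RInt gs a b.
Proof. apply exc. intros; apply gs_cont. Qed.

Definition jf (t s : R) := exp (- (t ^ 2 * (1 + s ^ 2))) / (1 + s ^ 2).
Definition jd (t s : R) := - (2 * t) * exp (- (t ^ 2 * (1 + s ^ 2))).

Lemma pos1s s : 0 < 1 + s ^ 2.
Proof. nra. Qed.

Lemma jf_der t s : is_derive (fun t => jf t s) t (jd t s).
Proof.
unfold jf, jd. auto_derive. auto.
replace (t * (t * 1) * (1 + s * (s * 1))) with (t ^ 2 * (1 + s ^ 2)) by ring.
field. generalize (pos1s s); lra.
Qed.

Lemma c2_exp f x y : continuity_2d_pt f x y -> continuity_2d_pt (fun u v => exp (f u v)) x y.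
Proof. intros H. apply continuity_1d_2d_pt_comp; auto. apply derivable_continuous_pt. apply derivable_pt_exp. Qed.

Lemma c2_pow2 f x y : continuity_2d_pt f x y -> continuity_2d_pt (fun u v => f u v ^ 2) x y.
Proof. intros H. apply continuity_2d_pt_ext with (fun u v => f u v * f u v). intros; ring.
apply continuity_2d_pt_mult; auto. Qed.

Lemma jd_cont t s : continuity_2d_pt jd t s.
Proof.
unfold jd. apply continuity_2d_pt_mult.
- apply continuity_2d_pt_opp. apply continuity_2d_pt_mult. apply continuity_2d_pt_const. apply continuity_2d_pt_id1.
- apply c2_exp. apply continuity_2d_pt_opp. apply continuity_2d_pt_mult.
  apply c2_pow2, continuity_2d_pt_id1. apply continuity_2d_pt_plus. apply continuity_2d_pt_const.
  apply c2_pow2, continuity_2d_pt_id2.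
Qed.

Definition II t := RInt gs 0 t.
Definition JJ t := RInt (fun s => jf t s) 0 1.

Lemma II_der t : is_derive II t (gs t).
Proof. apply (ftc_cont gs). apply gs_cont. Qed.

Lemma JJ_der t : is_derive JJ t (RInt (fun s => jd t s) 0 1).
Proof.
replace (RInt (fun s => jd t s) 0 1) with (RInt (fun s => Derive (fun u => jf u s) t) 0 1).
apply (is_derive_RInt_param jf 0 1 t).
- apply filter_forall. intros x0 s _. eexists. apply jf_der.
- intros s _. apply continuity_2d_pt_ext with jd. intros; symmetry; apply is_derive_unique, jf_der. apply jd_cont.
- apply filter_forall. intros y. apply exc. intros z _. apply dcont. unfold jf. auto_derive.
  generalize (pos1s z); lra.
- apply RInt_ext. intros; apply is_derive_unique, jf_der.
Qed.

Lemma jd_aux t x : jd t x = -2 * gs t * (t * gs (t * x + 0)).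
Proof.
unfold jd, gs.
replace (- (t ^ 2 * (1 + x ^ 2))) with (- t ^ 2 + - ((t * x + 0) ^ 2)) by ring.
rewrite exp_plus. ring.
Qed.

Lemma jd_int t : RInt (fun s => jd t s) 0 1 = - 2 * gs t * II t.
Proof.
unfold II.
assert (E := RInt_comp_lin gs t 0 0 1 (gs_ex _ _)).
replace (t * 0 + 0) with 0 in E by ring. replace (t * 1 + 0) with t in E by ring.
rewrite <- E.
transitivity (scal (-2 * gs t) (RInt (fun y => scal t (gs (t * y + 0))) 0 1)); [|reflexivity].
rewrite <- (RInt_scal (fun y => scal t (gs (t * y + 0))) 0 1 (- 2 * gs t)).
apply RInt_ext. intros x _. rewrite jd_aux. symmetry. etransitivity. apply scal_R2. f_equal.
apply (@ex_RInt_scal R_NormedModule (fun y => gs (t * y + 0))). apply exc. intros z _. apply dcont. unfold gs. auto_derive. auto.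
Qed.
Lemma gauss_half L : (II L) ^ 2 <= PI / 4.
Proof.
assert (K : II L * II L + JJ L = II 0 * II 0 + JJ 0).
{ apply (zero_deriv_eq (fun t => II t * II t + JJ t) (fun _ => II 0 * II 0 + JJ 0) (fun _ => 0) 0 L).
  - intros z. replace 0 with (plus (plus (mult (gs z) (II z)) (mult (II z) (gs z))) (RInt (fun s => jd z s) 0 1)).
    apply (@is_derive_plus R_AbsRing R_NormedModule).
    apply (@is_derive_mult R_AbsRing). apply II_der. apply II_der. intros; apply Rmult_comm.
    apply JJ_der. rewrite jd_int. unfold plus, mult; simpl. ring.
  - intros z. apply (@is_derive_const R_AbsRing R_NormedModule).
  - reflexivity. }
assert (J0 : JJ 0 = PI / 4).
{ unfold JJ. rewrite <- atan_1. replace (atan 1) with (atan 1 - atan 0) by (rewrite atan_0; ring).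
  apply is_RInt_unique. apply (@is_RInt_derive R_CompleteNormedModule atan).
  - intros x _. apply is_derive_Reals. unfold jf. replace (exp (- (0 ^ 2 * (1 + x ^ 2))) / (1 + x ^ 2)) with (/ (1 + x^2)).
    apply derivable_pt_lim_atan. replace (- (0 ^ 2 * (1 + x ^ 2))) with 0 by ring. rewrite exp_0. field. generalize (pos1s x); lra.
  - intros x _. apply dcont. unfold jf. auto_derive. generalize (pos1s x); lra. }
assert (I0 : II 0 = 0). { unfold II. exact (@RInt_point R_CompleteNormedModule 0 gs). }
assert (JL : 0 <= JJ L).
{ unfold JJ. apply RInt_ge_0. lra. apply exc. intros z _. apply dcont. unfold jf. auto_derive.
  generalize (pos1s z); lra. intros x _. unfold jf. apply Rlt_le, Rdiv_lt_0_compat. apply exp_pos. apply pos1s. }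
rewrite I0, J0 in K. nra.
Qed.

Lemma gs_pos x : 0 <= gs x.
Proof. unfold gs. apply Rlt_le, exp_pos. Qed.

Lemma II_le L : 0 <= L -> II L <= sqrt PI / 2.
Proof.
intros HL. assert (H := gauss_half L).
assert (0 <= II L). { unfold II. apply RInt_ge_0; auto. apply gs_ex. intros; apply gs_pos. }
assert (Hs : 0 <= sqrt PI) by apply sqrt_pos.
assert (Hs2 : sqrt PI * sqrt PI = PI) by (apply sqrt_sqrt; generalize PI_RGT_0; lra).
nra.
Qed.

Lemma gs_sym L : RInt gs (- L) 0 = II L.
Proof.
unfold II.
assert (E := RI_lin gs (-1) 0 0 L). replace (-1 * 0 + 0) with 0 in E by ring.
replace (-1 * L + 0) with (- L) in E by ring. specialize (E (gs_ex _ _)).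
rewrite RI_swap by apply gs_ex. rewrite <- E.
rewrite (RInt_ext _ (fun y => -1 * gs y)).
rewrite RI_scal by apply gs_ex. toR. ring.
intros x _. unfold gs. replace ((-1 * x + 0) ^ 2) with (x ^ 2) by ring. reflexivity.
Qed.

Lemma gauss_bound Y X : Y <= X -> RInt gs Y X <= sqrt PI.
Proof.
intros H. set (L := Rmax (Rabs Y) (Rabs X)).
assert (HY : - L <= Y). { assert (Rabs Y <= L) by apply Rmax_l. revert H0. unfold Rabs; destruct Rcase_abs; lra. }
assert (HX : X <= L). { assert (Rabs X <= L) by apply Rmax_r. revert H0. unfold Rabs; destruct Rcase_abs; lra. }
apply Rle_trans with (RInt gs (-L) L).
apply RI_sub; try lra. intros; apply gs_cont. intros; apply gs_pos.
rewrite <- (RI_chasles gs (-L) 0 L) by apply gs_ex.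
rewrite gs_sym. fold (II L). assert (II L <= sqrt PI / 2) by (apply II_le; lra). lra.
Qed.

Lemma gauss_scaled c Y X : 0 < c -> Y <= X ->
  RInt (fun x => exp (- (c * x ^ 2))) Y X <= sqrt PI / sqrt c.
Proof.
intros Hc H. set (k := sqrt c).
assert (Hk : 0 < k) by (apply sqrt_lt_R0; auto).
assert (Hk2 : k * k = c) by (apply sqrt_sqrt; lra).
assert (E := RI_lin gs k 0 Y X (gs_ex _ _)).
rewrite (RInt_ext _ (fun y => / k * (k * gs (k * y + 0)))).
rewrite RI_scal. rewrite E.
assert (RInt gs (k * Y + 0) (k * X + 0) <= sqrt PI) by (apply gauss_bound; nra).
unfold Rdiv. rewrite (Rmult_comm (sqrt PI)). apply Rmult_le_compat_l. apply Rlt_le, Rinv_0_lt_compat; auto. auto.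
apply exc. intros z _. apply dcont. unfold gs. auto_derive. auto.
intros x _. unfold gs. replace ((k * x + 0) ^ 2) with (c * x ^ 2) by (rewrite <- Hk2; ring). toR. field. lra.
Qed.

Lemma sup_lim (FA FB : (R -> Prop) -> Prop) (HA : ProperFilter FA) (HB : ProperFilter FB)
  (f : R -> R) (D : R * R -> Prop) M :
  filter_prod FA FB D ->
  (forall p, D p -> ex_RInt f (fst p) (snd p)) ->
  (forall p, D p -> RInt f (fst p) (snd p) <= M) ->
  (forall p, D p -> filter_prod FA FB (fun q => D q /\ RInt f (fst p) (snd p) <= RInt f (fst q) (snd q))) ->
  exists l, is_RInt_gen f FA FB l /\ (forall p, D p -> RInt f (fst p) (snd p) <= l)
     /\ (forall e, 0 < e -> exists p, D p /\ l - e < RInt f (fst p) (snd p)).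
Proof.
intros HD Hex HM Hmono.
set (E := fun r => exists p, D p /\ r = RInt f (fst p) (snd p)).
assert (Hb : bound E). { exists M. intros r [p [Hp ->]]. auto. }
assert (Hne : exists r, E r).
{ destruct HD as [Q R0 HQ HR HQR]. destruct (filter_ex Q HQ) as [x Hx].
  destruct (filter_ex R0 HR) as [y Hy]. exists (RInt f x y). exists (x, y). split; auto. }
destruct (completeness E Hb Hne) as [l [Hub Hlub]].
assert (Hup : forall p, D p -> RInt f (fst p) (snd p) <= l).
{ intros p Hp. apply Hub. exists p; auto. }
assert (Happ : forall e, 0 < e -> exists p, D p /\ l - e < RInt f (fst p) (snd p)).
{ intros e He. apply Classical_Prop.NNPP. intros Hn.
  assert (l <= l - e). { apply Hlub. intros r [p [Hp ->]].
    apply Rnot_lt_le. intros Hlt. apply Hn. exists p; auto. }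
  lra. }
exists l. split; [|split; auto].
intros P [eps Heps]. unfold filtermapi.
destruct (Happ eps (cond_pos eps)) as [p0 [Hp0 Hlt]].
generalize (Hmono p0 Hp0). apply filter_imp.
intros q [Hq Hle]. exists (RInt f (fst q) (snd q)). split.
- apply (@RInt_correct R_CompleteNormedModule). auto.
- apply Heps. assert (RInt f (fst q) (snd q) <= l) by auto.
  change (Rabs (RInt f (fst q) (snd q) - l) < eps).
  rewrite Rabs_left1 by lra. lra.
Qed.

Definition gam (a s : R) := Rpower s (a - 1) * exp (- s).

Lemma exp_le x y : x <= y -> exp x <= exp y.
Proof. intros H. destruct (Rle_lt_or_eq_dec _ _ H) as [H'|H']. apply Rlt_le, exp_increasing; auto. subst; lra. Qed.

Lemma ln_le_sub1 y : 0 < y -> ln y <= y - 1.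
Proof. intros H. generalize (exp_ineq1_le (ln y)). rewrite exp_ln; auto. lra. Qed.

Lemma gam_cont a s : 0 < s -> continuous (gam a) s.
Proof. intros H. apply dcont. unfold gam, Rpower. auto_derive. auto. Qed.

Lemma gam_pos a s : 0 <= gam a s.
Proof. unfold gam, Rpower. apply Rlt_le, Rmult_lt_0_compat; apply exp_pos. Qed.

Lemma gam_ex a x y : 0 < x -> 0 < y -> ex_RInt (gam a) x y.
Proof. intros Hx Hy. apply exc. intros z Hz. apply gam_cont.
apply Rlt_le_trans with (Rmin x y). apply Rmin_glb_lt; auto. apply Hz. Qed.

Lemma gam_bound_pt a s : 1 < a -> 0 < s ->
  gam a s <= exp ((a - 1) * (ln (2 * (a - 1)) - 1)) * exp (- s / 2).
Proof.
intros Ha Hs. unfold gam, Rpower. rewrite <- !exp_plus. apply exp_le.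
set (c := 2 * (a - 1)). assert (Hc : 0 < c) by (unfold c; lra).
assert (H := ln_le_sub1 (s / c) (Rdiv_lt_0_compat _ _ Hs Hc)).
rewrite ln_div in H by auto.
assert (E : (a - 1) * (ln s - ln c) <= (a - 1) * (s / c - 1)) by (apply Rmult_le_compat_l; lra).
assert (E2 : (a - 1) * (s / c) = s / 2) by (unfold c; field; lra).
nra.
Qed.

Lemma gam_bound a x y : 1 < a -> 0 < x -> x <= y ->
  RInt (gam a) x y <= 2 * exp ((a - 1) * (ln (2 * (a - 1)) - 1)).
Proof.
intros Ha Hx Hxy. set (K := exp ((a - 1) * (ln (2 * (a - 1)) - 1))).
assert (HK : 0 < K) by apply exp_pos.
apply Rle_trans with (RInt (fun s => K * exp (- s / 2)) x y).
- apply RInt_le; auto. apply gam_ex; lra.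
  apply exc. intros; apply dcont; auto_derive; auto.
  intros; apply gam_bound_pt; lra.
- assert (E : RInt (fun s => K * exp (- s / 2)) x y = (- 2 * K * exp (- y / 2)) - (- 2 * K * exp (- x / 2))).
  { apply is_RInt_unique. apply (@is_RInt_derive R_CompleteNormedModule (fun s => - 2 * K * exp (- s / 2))).
    - intros; auto_derive; auto. unfold Rdiv. field.
    - intros; apply dcont; auto_derive; auto. }
  rewrite E. assert (0 < exp (- y / 2)) by apply exp_pos.
  assert (exp (- x / 2) <= 1). { rewrite <- exp_0. apply exp_le. lra. } nra.
Qed.

Lemma gamma_prop a : 1 < a -> exists l, Gamma a = l /\ 0 < l
  /\ (forall x y, 0 < x -> x <= y -> RInt (gam a) x y <= l)
  /\ (forall e, 0 < e -> exists x y, 0 < x < y /\ l - e < RInt (gam a) x y).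
Proof.
intros Ha.
destruct (sup_lim (at_right 0) (Rbar_locally p_infty) (at_right_proper_filter 0) (Rbar_locally_filter p_infty)
  (gam a) (fun p => 0 < fst p < snd p) (2 * exp ((a - 1) * (ln (2 * (a - 1)) - 1)))) as [l [Hl [Hup Happ]]].
- exists (fun x => 0 < x < 1) (fun y => 1 < y).
  + exists (mkposreal 1 Rlt_0_1). intros x Hx Hx0. split; auto.
    change (Rabs (x - 0) < 1) in Hx. revert Hx. unfold Rabs; destruct Rcase_abs; lra.
  + exists 1. auto.
  + intros x y Hx Hy. simpl. lra.
- intros p Hp. apply gam_ex; lra.
- intros p Hp. apply gam_bound; lra.
- intros [p1 p2] Hp. simpl in Hp.
  exists (fun x => 0 < x < p1) (fun y => p2 < y).
  + exists (mkposreal p1 (proj1 Hp)). intros x Hx Hx0. split; auto.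
    change (Rabs (x - 0) < p1) in Hx. revert Hx. unfold Rabs; destruct Rcase_abs; lra.
  + exists p2. auto.
  + intros x y Hx Hy. simpl. split. lra.
    apply RI_sub; try lra. intros; apply gam_cont; lra. intros; apply gam_pos.
- exists l. split; [|split; [|split]].
  + unfold Gamma. apply (is_RInt_gen_unique (V:=R_CompleteNormedModule)).
    exact Hl.
  + apply Rlt_le_trans with (RInt (gam a) 1 2).
    apply RInt_gt_0. lra. intros. unfold gam, Rpower. apply Rmult_lt_0_compat; apply exp_pos.
    intros; apply gam_cont; lra.
    apply (Hup (1, 2)). simpl; lra.
  + intros x y Hx Hxy. destruct (Rle_lt_or_eq_dec _ _ Hxy) as [H|H].
    apply (Hup (x, y)). simpl; lra.
    subst. rewrite RI_point. apply Rle_trans with (RInt (gam a) 1 2).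
    apply RInt_ge_0. lra. apply gam_ex; lra. intros; apply gam_pos.
    apply (Hup (1, 2)). simpl; lra.
  + intros e He. destruct (Happ e He) as [[x y] [Hp Hlt]]. exists x, y. auto.
Qed.

Lemma Rmax_cont d z : continuous (fun z => Rmax z d) z.
Proof.
apply filterlim_locally. intros eps. exists eps. intros y Hy.
change (Rabs (y - z) < eps) in Hy. change (Rabs (Rmax y d - Rmax z d) < eps).
revert Hy. unfold Rmax. destruct (Rle_dec y d); destruct (Rle_dec z d); unfold Rabs;
 repeat destruct Rcase_abs; intros; lra.
Qed.

Lemma powmax_cont d c z : 0 < d -> continuous (fun z => Rpower (Rmax z d) c) z.
Proof.
intros Hd. apply (continuous_comp (fun z => Rmax z d) (fun y => Rpower y c)).
apply Rmax_cont. apply dcont. unfold Rpower. auto_derive.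
apply Rlt_le_trans with d; auto. apply Rmax_r.
Qed.

Definition gfun nu d0 (u x : R) := Rpower (Rmax u d0) ((nu + 1) / 2 - 1) * exp (- (u * (1 + x ^ 2 / nu))).

Lemma gfun_c2 nu d0 u x : 0 < d0 -> continuity_2d_pt (gfun nu d0) u x.
Proof.
intros Hd. unfold gfun. apply continuity_2d_pt_mult.
- apply (continuity_1d_2d_pt_comp (fun z => Rpower (Rmax z d0) ((nu + 1) / 2 - 1)) (fun u v => u)).
  apply continuity_pt_filterlim. apply powmax_cont; auto. apply continuity_2d_pt_id1.
- apply c2_exp. apply continuity_2d_pt_opp. apply continuity_2d_pt_mult. apply continuity_2d_pt_id1.
  apply continuity_2d_pt_plus. apply continuity_2d_pt_const.
  apply continuity_2d_pt_mult. apply c2_pow2, continuity_2d_pt_id2. apply continuity_2d_pt_const.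
Qed.

Lemma gfun_pos nu d0 u x : 0 <= gfun nu d0 u x.
Proof. unfold gfun, Rpower. apply Rlt_le, Rmult_lt_0_compat; apply exp_pos. Qed.

Definition hh nu x := Rpower (1 + x ^ 2 / nu) (- ((nu + 1) / 2)).

Lemma pt1 c y a : 0 < c -> 0 < y ->
  Rpower c (- a) * (c * gam a (c * y + 0)) = Rpower y (a - 1) * exp (- (y * c)).
Proof.
intros Hc Hy. unfold gam.
replace (c * y + 0) with (c * y) by ring.
rewrite <- Rpower_mult_distr by auto.
replace (- (c * y)) with (- (y * c)) by ring.
assert (E : Rpower c (- a) * (c * (Rpower c (a - 1))) = 1).
{ rewrite <- (Rpower_1 c) at 2 by auto. rewrite <- !Rpower_plus.
  replace (- a + (1 + (a - 1))) with 0 by ring. apply Rpower_O; auto. }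
transitivity ((Rpower c (- a) * (c * (Rpower c (a - 1)))) * (Rpower y (a - 1) * exp (- (y * c)))).
ring. rewrite E. ring.
Qed.

Lemma step1 nu d0 dl U x : 2 < nu -> 0 < d0 -> 0 < dl < U -> d0 <= dl / (1 + x ^ 2 / nu) ->
  RInt (gam ((nu + 1) / 2)) dl U * hh nu x <= RInt (fun u => gfun nu d0 u x) d0 U.
Proof.
intros Hnu Hd0 [Hdl HU] Hle.
set (c := 1 + x ^ 2 / nu). fold c in Hle.
assert (Hc1 : 1 <= c). { unfold c. assert (0 <= x ^ 2 / nu). apply Rdiv_le_0_compat. nra. lra. lra. }
assert (Hc : 0 < c) by lra.
set (a := (nu + 1) / 2).
assert (E := RI_lin (gam a) c 0 (dl / c) (U / c)).
replace (c * (dl / c) + 0) with dl in E by (field; lra).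
replace (c * (U / c) + 0) with U in E by (field; lra).
specialize (E (gam_ex a _ _ Hdl (Rlt_trans _ _ _ Hdl HU))).
rewrite <- E. rewrite Rmult_comm.
unfold hh. fold c. fold a.
rewrite <- RI_scal.
2:{ apply exc. intros z Hz. apply dcont. unfold gam, Rpower. auto_derive.
    assert (0 < dl / c) by (apply Rdiv_lt_0_compat; auto).
    assert (0 < U / c) by (apply Rdiv_lt_0_compat; lra).
    assert (0 < Rmin (dl / c) (U / c)) by (apply Rmin_glb_lt; auto). nra. }
assert (Hdc : 0 < dl / c) by (apply Rdiv_lt_0_compat; auto).
assert (HUc : dl / c < U / c) by (apply Rmult_lt_compat_r; auto; apply Rinv_0_lt_compat; auto).
rewrite (RInt_ext _ (fun u => gfun nu d0 u x)).
- apply RI_sub; try lra.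
  + unfold Rdiv. 
    rewrite <- (Rmult_1_r U) at 2. apply Rmult_le_compat_l. lra.
    rewrite <- Rinv_1. apply Rinv_le_contravar; lra.
  + intros z _. apply (c2d_x (gfun nu d0) z x). apply gfun_c2; auto.
  + intros; apply gfun_pos.
- intros y Hy. rewrite Rmin_left in Hy by lra. rewrite Rmax_right in Hy by lra.
  rewrite pt1 by lra. unfold gfun. rewrite Rmax_left by lra. fold c. fold a. reflexivity.
Qed.

Lemma step4 nu d0 u Y X : 2 < nu -> 0 < d0 -> d0 <= u -> Y <= X ->
  RInt (fun x => gfun nu d0 u x) Y X <= sqrt nu * sqrt PI * gam (nu / 2) u.
Proof.
intros Hnu Hd0 Hu HYX.
assert (Hu0 : 0 < u) by lra.
set (K := Rpower u ((nu + 1) / 2 - 1) * exp (- u)).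
assert (HK : 0 <= K) by (unfold K, Rpower; apply Rlt_le, Rmult_lt_0_compat; apply exp_pos).
rewrite (RInt_ext _ (fun x => K * exp (- ((u / nu) * x ^ 2)))).
2:{ intros x _. unfold gfun, K. rewrite Rmax_left by lra.
    replace (- (u * (1 + x ^ 2 / nu))) with (- u + - ((u / nu) * x ^ 2)) by (field; lra).
    rewrite exp_plus. toR. ring. }
rewrite RI_scal.
2:{ apply exc. intros z _. apply dcont. auto_derive. auto. }
assert (Hc : 0 < u / nu) by (apply Rdiv_lt_0_compat; lra).
apply Rle_trans with (K * (sqrt PI / sqrt (u / nu))).
apply Rmult_le_compat_l; auto. apply gauss_scaled; auto.
unfold K, gam. rewrite sqrt_div_alt by lra.
replace ((nu + 1) / 2 - 1) with ((nu / 2 - 1) + / 2) by field.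
rewrite Rpower_plus. rewrite Rpower_sqrt by auto.
assert (0 < sqrt u) by (apply sqrt_lt_R0; auto).
assert (0 < sqrt nu) by (apply sqrt_lt_R0; lra).
right. field. lra.
Qed.

Lemma hh_cont nu x : 0 < nu -> continuous (hh nu) x.
Proof. intros H. apply dcont. unfold hh, Rpower. auto_derive.
assert (0 <= x ^ 2 / nu) by (apply Rdiv_le_0_compat; nra). lra. Qed.

Lemma hh_pos nu x : 0 <= hh nu x.
Proof. unfold hh, Rpower. apply Rlt_le, exp_pos. Qed.

Lemma key nu l1 l2 Y X : 2 < nu -> Y <= X ->
  (forall e, 0 < e -> exists x y, 0 < x < y /\ l1 - e < RInt (gam ((nu + 1) / 2)) x y) ->
  (forall x y, 0 < x -> x <= y -> RInt (gam (nu / 2)) x y <= l2) ->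
  l1 * RInt (hh nu) Y X <= sqrt nu * sqrt PI * l2.
Proof.
intros Hnu HYX Happ Hup.
assert (Exh : ex_RInt (hh nu) Y X) by (apply exc; intros; apply hh_cont; lra).
set (Ih := RInt (hh nu) Y X).
assert (HIh : 0 <= Ih) by (apply RInt_ge_0; auto; intros; apply hh_pos).
apply Rle_plus_epsilon. intros eps Heps.
assert (He : 0 < eps / (Ih + 1)) by (apply Rdiv_lt_0_compat; lra).
destruct (Happ _ He) as [dl [U [[Hdl HU] Hlt]]].
set (A := RInt (gam ((nu + 1) / 2)) dl U). change (l1 - eps / (Ih + 1) < A) in Hlt.
set (cM := 1 + (Y ^ 2 + X ^ 2) / nu).
assert (HcM : 1 <= cM). { unfold cM. assert (0 <= (Y ^ 2 + X ^ 2) / nu) by (apply Rdiv_le_0_compat; nra). lra. }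
set (d0 := dl / cM).
assert (Hd0 : 0 < d0) by (apply Rdiv_lt_0_compat; lra).
assert (Hd0dl : d0 <= dl).
{ unfold d0, Rdiv. rewrite <- (Rmult_1_r dl) at 2. apply Rmult_le_compat_l. lra.
  rewrite <- Rinv_1. apply Rinv_le_contravar; lra. }
assert (S2 : forall u x, continuity_2d_pt (fun x u => gfun nu d0 u x) x u).
{ intros u x. apply c2d_swap. apply gfun_c2. auto. }
assert (Main : A * Ih <= sqrt nu * sqrt PI * l2).
{ unfold Ih. rewrite <- RI_scal by auto.
  apply Rle_trans with (RInt (fun x => RInt (fun u => gfun nu d0 u x) d0 U) Y X).
  - apply RInt_le; auto.
    + apply RI_ex_scal; auto.
    + apply exc. intros z _. apply (PC (fun x u => gfun nu d0 u x)). auto.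
    + intros x Hx. unfold A. apply step1; try lra.
      unfold d0. unfold Rdiv. apply Rmult_le_compat_l. lra.
      apply Rinv_le_contravar. assert (0 <= x ^ 2 / nu) by (apply Rdiv_le_0_compat; nra). lra.
      unfold cM. apply Rplus_le_compat_l. unfold Rdiv. apply Rmult_le_compat_r.
      apply Rlt_le, Rinv_0_lt_compat; lra. destruct (Rle_or_lt 0 x); nra.
  - rewrite fubini by (intros; apply gfun_c2; auto).
    apply Rle_trans with (RInt (fun u => sqrt nu * sqrt PI * gam (nu / 2) u) d0 U).
    + apply RInt_le; try lra.
      * apply exc. intros z _. apply PC. intros; apply gfun_c2; auto.
      * apply exc. intros z Hz. apply (continuous_scal_r (sqrt nu * sqrt PI) (gam (nu / 2))).
        apply gam_cont. apply Rlt_le_trans with (Rmin d0 U). apply Rmin_glb_lt; lra. apply Hz.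
      * intros u Hu. apply step4; lra.
    + rewrite RI_scal by (apply gam_ex; lra).
      apply Rmult_le_compat_l. apply Rmult_le_pos; apply sqrt_pos.
      apply Hup; lra. }
assert (E0 : 0 <= (A + eps / (Ih + 1) - l1) * Ih) by (apply Rmult_le_pos; lra).
assert (E1 : l1 * Ih <= A * Ih + eps / (Ih + 1) * Ih) by nra.
assert (E2 : eps / (Ih + 1) * Ih <= eps).
{ unfold Rdiv. replace (eps * / (Ih + 1) * Ih) with (eps * (Ih / (Ih + 1))) by (field; lra).
  rewrite <- (Rmult_1_r eps) at 2. apply Rmult_le_compat_l. lra.
  apply Rmult_le_reg_r with (Ih + 1). lra. unfold Rdiv. rewrite Rmult_assoc, Rinv_l by lra. lra. }
lra.
Qed.

Lemma poly_ineq nu q x s : 2 < nu -> 0 < q < 1 -> 0 <= x <= s -> s ^ 2 = x ^ 2 + nu * q ->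
  q * x * (nu * s ^ 2 + nu * (1 - q)) <= 2 * (1 + (nu / 2 - 1) * q) * s ^ 3.
Proof.
intros Hnu Hq Hx Hs.
replace (q * x * (nu * s ^ 2 + nu * (1 - q))) with (x * s ^ 2 * (nu * q) + (1 - q) * x * (nu * q)) by ring.
replace (2 * (1 + (nu / 2 - 1) * q) * s ^ 3) with (2 * s ^ 3 + (nu * q) * s ^ 3 - 2 * q * s ^ 3) by field.
assert (E : nu * q = s ^ 2 - x ^ 2) by lra. rewrite E.
assert (H1 : 0 <= (s ^ 2 - x ^ 2) * s ^ 2 * (s - x)).
{ apply Rmult_le_pos. apply Rmult_le_pos. nra. nra. lra. }
assert (H2 : x * (s ^ 2 - x ^ 2) <= s ^ 3). { assert (0 <= x ^ 3) by (apply pow_le; lra). nra. }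
assert (H3 : (1 - q) * (x * (s ^ 2 - x ^ 2)) <= (1 - q) * s ^ 3) by (apply Rmult_le_compat_l; lra).
assert (H4 : 0 <= s ^ 3) by (apply pow_le; lra).
nra.
Qed.

Lemma mk_bound nu m : 2 < nu -> 0 < m < nu ->
  Rpower m (nu / 2 - 1) * (1 + (nu / 2 - 1) * (1 - m / nu)) <= Rpower nu (nu / 2 - 1).
Proof.
intros Hnu Hm. set (k := nu / 2 - 1). assert (Hk : 0 < k) by (unfold k; lra).
set (p := m / nu). assert (Hp : 0 < p) by (apply Rdiv_lt_0_compat; lra).
assert (Hp1 : p < 1). { unfold p. apply Rmult_lt_reg_r with nu. lra. unfold Rdiv. rewrite Rmult_assoc, Rinv_l by lra. lra. }
replace m with (p * nu) at 1 by (unfold p; field; lra).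
rewrite <- Rpower_mult_distr by lra.
assert (A : Rpower p k * (1 + k * (1 - p)) <= 1).
{ unfold Rpower. apply Rle_trans with (exp (k * (p - 1)) * exp (k * (1 - p))).
  apply Rmult_le_compat. apply Rlt_le, exp_pos. nra.
  apply exp_le. apply Rmult_le_compat_l. lra. apply ln_le_sub1; auto.
  apply exp_ineq1_le.
  rewrite <- exp_plus. replace (k * (p - 1) + k * (1 - p)) with 0 by ring. rewrite exp_0. lra. }
assert (0 < Rpower nu k) by (unfold Rpower; apply exp_pos).
transitivity ((Rpower p k * (1 + k * (1 - p))) * Rpower nu k). right; ring.
rewrite <- (Rmult_1_l (Rpower nu k)) at 2. apply Rmult_le_compat_r; lra.
Qed.

Definition phi nu m x := Rpower (x ^ 2 + nu) (- ((nu - 1) / 2)) * Rpower (x ^ 2 + nu - m) (- / 2).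
Definition dphi nu m x := - x * (Rpower (x ^ 2 + nu) (- ((nu - 1) / 2)) / (x ^ 2 + nu))
  * (Rpower (x ^ 2 + nu - m) (- / 2) / (x ^ 2 + nu - m)) * (nu * (x ^ 2 + nu - m) + m).

Lemma phi_der nu m x : 0 < m < nu -> is_derive (phi nu m) x (dphi nu m x).
Proof.
intros H. unfold dphi, phi, Rpower.
assert (0 < x ^ 2 + nu - m) by nra.
auto_derive. replace (x * (x * 1) + nu + - m) with (x ^ 2 + nu - m) by ring.
replace (x * (x * 1) + nu) with (x ^ 2 + nu) by ring. lra.
replace (x * (x * 1) + nu + - m) with (x ^ 2 + nu - m) by ring.
replace (x * (x * 1) + nu) with (x ^ 2 + nu) by ring.
field. lra.
Qed.

Lemma Rpower_inv_base nu c : 0 < nu -> Rpower (/ nu) c = Rpower nu (- c).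
Proof. intros H. unfold Rpower. rewrite ln_Rinv by auto. f_equal. ring. Qed.

Lemma pt_main nu m x : 2 < nu -> 0 < m < nu -> 0 < x ->
  sqrt nu * (nu - m) * Rpower m (nu / 2 - 1) / 2 * (- dphi nu m x) <= hh nu x.
Proof.
intros Hnu Hm Hx.
assert (Hw : 0 < x ^ 2 + nu) by nra. assert (Hs2 : 0 < x ^ 2 + nu - m) by nra.
set (s := sqrt (x ^ 2 + nu - m)). assert (Hs : 0 < s) by (apply sqrt_lt_R0; auto).
assert (Hss : s ^ 2 = x ^ 2 + nu - m) by (unfold s; apply pow2_sqrt; lra).
set (A := Rpower (x ^ 2 + nu) (- ((nu - 1) / 2)) / (x ^ 2 + nu)).
assert (HA : 0 < A) by (unfold A, Rpower; apply Rdiv_lt_0_compat; auto; apply exp_pos).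
set (k := nu / 2 - 1).
set (Mk := Rpower m k). set (Nk := Rpower nu k).
assert (HMk : 0 < Mk) by (unfold Mk, Rpower; apply exp_pos).
assert (HNk : 0 < Nk) by (unfold Nk, Rpower; apply exp_pos).
assert (Hsn : 0 < sqrt nu) by (apply sqrt_lt_R0; lra).
assert (Hh : hh nu x = A * (Nk * nu * sqrt nu)).
{ unfold hh, A, Nk, k. replace (1 + x ^ 2 / nu) with ((x ^ 2 + nu) * / nu) by (field; lra).
  rewrite <- Rpower_mult_distr by (try apply Rinv_0_lt_compat; lra).
  rewrite Rpower_inv_base by lra.
  replace (- ((nu + 1) / 2)) with (- ((nu - 1) / 2) + - (1)) by field.
  replace (- (- ((nu - 1) / 2) + - (1))) with ((nu / 2 - 1) + 1 + / 2) by field.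
  rewrite !Rpower_plus. rewrite Rpower_Ropp with (y := 1). rewrite !Rpower_1 by lra.
  rewrite Rpower_sqrt by lra. field. lra. }
assert (HP2 : Rpower (x ^ 2 + nu - m) (- / 2) = / s).
{ rewrite Rpower_Ropp, Rpower_sqrt by auto. reflexivity. }
rewrite Hh. unfold dphi. fold A. rewrite HP2. rewrite <- Hss.
set (q := 1 - m / nu).
assert (Hq : 0 < q < 1).
{ unfold q. split. apply Rlt_0_minus. apply Rmult_lt_reg_r with nu. lra. unfold Rdiv. rewrite Rmult_assoc, Rinv_l by lra. lra.
  assert (0 < m / nu) by (apply Rdiv_lt_0_compat; lra). lra. }
assert (Hmq : m = nu * (1 - q)) by (unfold q; field; lra).
assert (Hdq : nu - m = nu * q) by (unfold q; field; lra).
assert (P := poly_ineq nu q x s Hnu Hq). 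
assert (Hxs : x <= s). { apply Rsqr_incr_0_var. unfold Rsqr. simpl in Hss. nra. lra. }
specialize (P (conj (Rlt_le _ _ Hx) Hxs)). rewrite <- Hmq in P. specialize (P ltac:(rewrite Hss; rewrite <- Hdq; ring)).
assert (MB := mk_bound nu m Hnu Hm). fold k Mk Nk q in MB.
assert (T : (nu - m) * Mk * x * (nu * s ^ 2 + m) <= 2 * nu * Nk * s ^ 3).
{ rewrite Hdq. apply Rle_trans with (nu * Mk * (2 * (1 + k * q) * s ^ 3)).
  replace (nu * q * Mk * x * (nu * s ^ 2 + m)) with (nu * Mk * (q * x * (nu * s ^ 2 + m))) by ring.
  apply Rmult_le_compat_l. apply Rmult_le_pos; lra. exact P.
  replace (nu * Mk * (2 * (1 + k * q) * s ^ 3)) with (2 * nu * s ^ 3 * (Mk * (1 + k * q))) by ring.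
  replace (2 * nu * Nk * s ^ 3) with (2 * nu * s ^ 3 * Nk) by ring.
  apply Rmult_le_compat_l. assert (0 < s ^ 3) by (apply pow_lt; auto). nra. exact MB. }
fold Mk. fold k.
replace (sqrt nu * (nu - m) * Mk / 2 * - (- x * A * (/ s / s ^ 2) * (nu * s ^ 2 + m)))
  with ((A * sqrt nu / (2 * s ^ 3)) * ((nu - m) * Mk * x * (nu * s ^ 2 + m))) by (field; lra).
replace (A * (Nk * nu * sqrt nu)) with ((A * sqrt nu / (2 * s ^ 3)) * (2 * nu * Nk * s ^ 3)) by (field; lra).
apply Rmult_le_compat_l. apply Rlt_le, Rdiv_lt_0_compat. nra. assert (0 < s ^ 3) by (apply pow_lt; auto). lra.
exact T.
Qed.

Lemma phi_le nu m X : 2 < nu -> 0 < m < nu -> 1 <= X -> 0 < phi nu m X <= / X.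
Proof.
intros Hnu Hm HX. unfold phi.
assert (H1 : 0 < Rpower (X ^ 2 + nu) (- ((nu - 1) / 2)) <= 1).
{ split. unfold Rpower; apply exp_pos. unfold Rpower.
  assert (0 <= ln (X ^ 2 + nu)). { rewrite <- ln_1. apply ln_le. lra. nra. }
  assert (0 <= (nu - 1) / 2 * ln (X ^ 2 + nu)) by (apply Rmult_le_pos; lra).
  apply Rle_trans with (exp 0); [apply exp_le | rewrite exp_0; lra].
  apply Rle_trans with (- ((nu - 1) / 2 * ln (X ^ 2 + nu))). right; ring. lra. }
assert (Hw : 0 < X ^ 2 + nu - m) by nra.
rewrite (Rpower_Ropp (X ^ 2 + nu - m) (/ 2)), Rpower_sqrt by auto.
assert (H2 : X <= sqrt (X ^ 2 + nu - m)).
{ rewrite <- (sqrt_pow2 X) at 1 by lra. apply sqrt_le_1_alt. lra. }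
assert (0 < / sqrt (X ^ 2 + nu - m)) by (apply Rinv_0_lt_compat; lra).
assert (/ sqrt (X ^ 2 + nu - m) <= / X) by (apply Rinv_le_contravar; lra).
split. nra. nra.
Qed.

Theorem lemma1 (nu m t : R) (Hnu : 2 < nu) (Hm0 : 0 < m) (Hm1 : m < nu) (Ht : 0 < t) :
  1 / ((1 - student_cdf nu t) * Rpower (t ^ 2 + nu) ((nu - 1) / 2))
  <= sqrt (t ^ 2 + nu - m) / kappa nu m.
Proof.
destruct (gamma_prop ((nu + 1) / 2) ltac:(lra)) as [l1 [G1 [Hl1 [Hub1 Happ1]]]].
destruct (gamma_prop (nu / 2) ltac:(lra)) as [l2 [G2 [Hl2 [Hub2 Happ2]]]].
set (C := l1 / (sqrt (nu * PI) * l2)).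
assert (HsnP : sqrt (nu * PI) = sqrt nu * sqrt PI) by (apply sqrt_mult; generalize PI_RGT_0; lra).
assert (HsP : 0 < sqrt PI) by (apply sqrt_lt_R0, PI_RGT_0).
assert (Hsn : 0 < sqrt nu) by (apply sqrt_lt_R0; lra).
assert (HC : 0 < C) by (unfold C; rewrite HsnP; apply Rdiv_lt_0_compat; auto; repeat apply Rmult_lt_0_compat; auto).
set (f := student_pdf nu).
assert (Hf : forall x, f x = C * hh nu x).
{ intros x. unfold f, student_pdf, hh, C. rewrite G1, G2. reflexivity. }
assert (Hfc : forall x, continuous f x).
{ intros x. apply continuous_ext with (fun x => C * hh nu x). intros; symmetry; apply Hf.
  apply (continuous_scal_r C (hh nu)). apply hh_cont. lra. }
assert (Hfp : forall x, 0 <= f x). { intros x. rewrite Hf. apply Rmult_le_pos. lra. apply hh_pos. }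
assert (Hfe : forall a b, ex_RInt f a b). { intros a b. apply exc. intros; apply Hfc. }
assert (Key : forall Y X, Y <= X -> RInt f Y X <= 1).
{ intros Y X HYX. rewrite (RInt_ext _ (fun x => C * hh nu x)) by (intros; apply Hf).
  rewrite RI_scal by (apply exc; intros; apply hh_cont; lra).
  assert (K := key nu l1 l2 Y X Hnu HYX Happ1 Hub2).
  unfold C. rewrite HsnP.
  apply Rmult_le_reg_l with (sqrt nu * sqrt PI * l2). repeat apply Rmult_lt_0_compat; auto.
  replace (sqrt nu * sqrt PI * l2 * (l1 / (sqrt nu * sqrt PI * l2) * RInt (hh nu) Y X)) with (l1 * RInt (hh nu) Y X)
    by (field; repeat split; lra).
  lra. }
destruct (sup_lim (Rbar_locally m_infty) (at_point t) (Rbar_locally_filter m_infty) (at_point_filter t)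
  f (fun p => fst p < t /\ snd p = t) 1) as [S [HS [HSup HSapp]]].
- exists (fun y => y < t) (fun z => z = t).
  + exists t. auto.
  + reflexivity.
  + intros x y Hx Hy. simpl. auto.
- intros p _. apply Hfe.
- intros [p1 p2] [Hp1 Hp2]. simpl in *. apply Key. lra.
- intros [p1 p2] [Hp1 Hp2]. simpl in *. subst p2.
  exists (fun y => y < p1) (fun z => z = t).
  + exists p1. auto.
  + reflexivity.
  + intros x y Hx Hy. simpl. subst y. split. lra.
    apply RI_sub; try lra. intros; apply Hfc. intros; apply Hfp.
- assert (Hcdf : student_cdf nu t = S).
  { unfold student_cdf. apply (is_RInt_gen_unique (V:=R_CompleteNormedModule)). exact HS. }
  rewrite Hcdf.
  set (K0 := sqrt nu * (nu - m) * Rpower m (nu / 2 - 1) / 2).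
  assert (HK0 : 0 < K0).
  { unfold K0. assert (0 < Rpower m (nu / 2 - 1)) by (unfold Rpower; apply exp_pos).
    apply Rdiv_lt_0_compat; [|lra]. repeat apply Rmult_lt_0_compat; lra. }
  assert (Hk : kappa nu m = C * K0).
  { unfold kappa, C, K0. rewrite G1, G2, HsnP. field. repeat split; lra. }
  rewrite Hk. set (kp := C * K0). assert (Hkp : 0 < kp) by (unfold kp; nra).
  assert (Tail : forall X, t < X -> kp * (phi nu m t - phi nu m X) <= RInt f t X).
  { intros X HX.
    destruct (MVT_cor2 (fun x => RInt f t x + kp * phi nu m x) (fun x => f x + kp * dphi nu m x) t X HX)
      as [c [Hc1 Hc2]].
    - intros c Hc. apply is_derive_Reals.
      apply (@is_derive_plus R_AbsRing R_NormedModule). apply (ftc_cont f). apply Hfc.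
      apply is_derive_Reals. apply (derivable_pt_lim_scal (phi nu m) kp c (dphi nu m c)).
      apply is_derive_Reals. apply phi_der. lra.
    - assert (Hd : 0 <= f c + kp * dphi nu m c).
      { rewrite Hf. unfold kp. assert (P := pt_main nu m c Hnu (conj Hm0 Hm1) ltac:(lra)). fold K0 in P.
        assert (C * (K0 * - dphi nu m c) <= C * hh nu c) by (apply Rmult_le_compat_l; lra). nra. }
      rewrite RI_point in Hc1. nra. }
  assert (Lim1 : forall X, t < X -> S + kp * (phi nu m t - phi nu m X) <= 1).
  { intros X HX. apply Rle_plus_epsilon. intros eps Heps.
    destruct (HSapp eps Heps) as [[Y T] [[HY HT] HYl]]. simpl in *. subst T.
    assert (E := RI_chasles f Y t X (Hfe _ _) (Hfe _ _)).
    assert (RInt f Y X <= 1) by (apply Key; lra).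
    assert (Tl := Tail X HX). lra. }
  assert (Lim2 : S + kp * phi nu m t <= 1).
  { apply Rle_plus_epsilon. intros eps Heps.
    set (X := Rmax (t + 1) (kp / eps + 1)).
    assert (HX1 : t + 1 <= X) by apply Rmax_l. assert (HX2 : kp / eps + 1 <= X) by apply Rmax_r.
    assert (0 < kp / eps) by (apply Rdiv_lt_0_compat; lra).
    assert (Hp := phi_le nu m X Hnu (conj Hm0 Hm1) ltac:(lra)).
    assert (L1 := Lim1 X ltac:(lra)).
    assert (kp * / X <= eps).
    { apply Rmult_le_reg_r with X. lra. rewrite Rmult_assoc, Rinv_l by lra.
      assert (kp = kp / eps * eps) by (field; lra). nra. }
    assert (kp * phi nu m X <= kp * / X) by (apply Rmult_le_compat_l; lra). lra. }
  set (P := Rpower (t ^ 2 + nu) ((nu - 1) / 2)).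
  assert (HP : 0 < P) by (unfold P, Rpower; apply exp_pos).
  assert (HW : 0 < t ^ 2 + nu - m) by nra.
  assert (HsW : 0 < sqrt (t ^ 2 + nu - m)) by (apply sqrt_lt_R0; auto).
  assert (Hphi : phi nu m t = / P * / sqrt (t ^ 2 + nu - m)).
  { unfold phi, P. rewrite Rpower_Ropp. rewrite (Rpower_Ropp _ (/ 2)). rewrite Rpower_sqrt by auto. reflexivity. }
  rewrite Hphi in Lim2.
  assert (H1 : kp / sqrt (t ^ 2 + nu - m) <= (1 - S) * P).
  { apply Rmult_le_reg_r with (/ P). apply Rinv_0_lt_compat; auto.
    replace ((1 - S) * P * / P) with (1 - S) by (field; lra).
    replace (kp / sqrt (t ^ 2 + nu - m) * / P) with (kp * (/ P * / sqrt (t ^ 2 + nu - m))) by (field; lra).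
    lra. }
  assert (H2 : 0 < kp / sqrt (t ^ 2 + nu - m)) by (apply Rdiv_lt_0_compat; auto).
  unfold Rdiv at 1. rewrite Rmult_1_l.
  replace (sqrt (t ^ 2 + nu - m) / kp) with (/ (kp / sqrt (t ^ 2 + nu - m))) by (field; lra).
  apply Rinv_le_contravar; auto.
Qed.
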